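(* Let $I=(\mathcal{M},[N],(u_i)_{i\in[N]})$ be a non-negative instance, $\lambda\ge0$, $\varepsilon>0$, and suppose the $\lambda$-max-min problem for $I$ has a solution. Let $0<\alpha<1$, $0<\beta<1$ with $\alpha\beta>1-\varepsilon$. For each $i$ let $c_i$ be any real with $\alpha\cdot MmS_{u_i}^N(\mathcal{M})\le c_i\le MmS_{u_i}^N(\mathcal{M})$, and let $[N]_{>0}:=\{i: c_i>0\}$. If $[N]_{>0}=\emptyset$, let $S^\varepsilon$ be any allocation. Otherwise let $u_i'(j):=u_i(j)/c_i$ for $i\in[N]_{>0}$, let $\lambda^*:=\max\{\min_{i\in[N]_{>0}}u_i'(S_i): (S_i)_{i\in[N]_{>0}}\text{ a partition of }\mathcal{M}\text{ indexed by }[N]_{>0}\}$, let $(S^\varepsilon_i)_{i\in[N]_{>0}}$ be any partition of $\mathcal{M}$ indexed by $[N]_{>0}$ with $u_i'(S^\varepsilon_i)\ge\beta\lambda^*$ for all $i\in[N]_{>0}$, and set $S^\varepsilon_i:=\emptyset$ for $i\notin[N]_{>0}$. Then $S^\varepsilon=(S^\varepsilon_1,\dots,S^\varepsilon_N)$ is a solution of the $((1-\varepsilon)\lambda)$-max-min problem for $I$, i.e. $u_i(S^\varepsilon_i)\ge(1-\varepsilon)\lambda\cdot MmS_{u_i}^N(\mathcal{M})$ for all $i$.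
   Context: A non-negative instance: finite item set $\mathcal{M}$, agents $[N]=\{1,\dots,N\}$, additive utilities $u_i$ with $u_i(j)\ge0$. $\Pi_N(\mathcal{M})$ is the set of ordered $N$-partitions of $\mathcal{M}$ (parts may be empty). $MmS_{u}^N(\mathcal{M}):=\max_{(S_1,\ldots,S_N)\in\Pi_N(\mathcal{M})}\min_{j} u(S_j)$. An allocation $S$ solves the $\mu$-max-min problem for $I$ iff $u_i(S_i)\ge\mu\cdot MmS_{u_i}^N(\mathcal{M})$ for all $i$. *)

(* Defs.v *)
From HB Require Import structures.
From mathcomp Require Import all_boot all_order all_algebra.
Set Implicit Arguments. Unset Strict Implicit. Unset Printing Implicit Defensive.
Import Order.TTheory GRing.Theory Num.Theory.
Local Open Scope ring_scope.

(* minimum / maximum of F over the finite nonempty predicate P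
   (the value 0 on an empty domain is an irrelevant convention) *)
Definition fmin (R : realDomainType) (T : finType) (P : pred T) (F : T -> R) : R :=
  match [pick x in P] with
  | Some x0 => \big[Num.min/F x0]_(x in P) F x
  | None => 0
  end.
Definition fmax (R : realDomainType) (T : finType) (P : pred T) (F : T -> R) : R :=
  match [pick x in P] with
  | Some x0 => \big[Num.max/F x0]_(x in P) F x
  | None => 0
  end.

Definition util (R : realDomainType) (M : finType) (v : M -> R) (S : {set M}) : R :=
  \sum_(j in S) v j.

(* An ordered N-partition of M (parts may be empty) is encoded by an
   assignment f : M -> 'I_N; part i is the bundle of f. *)
Definition bundle (M : finType) (N : nat) (f : {ffun M -> 'I_N}) (i : 'I_N) : {set M} :=
  [set j | f j == i].

Definition MmS (R : realDomainType) (M : finType) (N : nat) (v : M -> R) : R :=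
  fmax (fun _ : {ffun M -> 'I_N} => true)
       (fun f => fmin (fun _ : 'I_N => true) (fun k => util v (bundle f k))).

Definition solves_maxmin (R : realDomainType) (M : finType) (N : nat)
  (u : 'I_N -> M -> R) (mu : R) (f : {ffun M -> 'I_N}) : Prop :=
  forall i : 'I_N, mu * MmS N (u i) <= util (u i) (bundle f i).

(* Main.v *)
Require Import Defs.
From HB Require Import structures.
From mathcomp Require Import all_boot all_order all_algebra.
From mathcomp Require Import ring lra.
Set Implicit Arguments. Unset Strict Implicit. Unset Printing Implicit Defensive.
Import Order.TTheory GRing.Theory Num.Theory.
Local Open Scope ring_scope.

Lemma le_bigmax_seq (R : realDomainType) (T : eqType) (r : seq T) (P : pred T)
  (F : T -> R) d x : x \in r -> P x -> F x <= \big[Num.max/d]_(y <- r | P y) F y.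
Proof.
elim: r => // y r IH; rewrite inE big_cons; case/orP => [/eqP-> Px|xr Px].
  by rewrite Px le_max lexx.
case: ifP => _; last exact: IH.
by rewrite le_max IH ?orbT.
Qed.

Lemma fmax_ge (R : realDomainType) (T : finType) (P : pred T) (F : T -> R) x :
  P x -> F x <= fmax P F.
Proof.
move=> Px; rewrite /fmax; case: pickP => [x0 _|H]; last by move: (H x); rewrite unfold_in Px.
exact: le_bigmax_seq (mem_index_enum _) _.
Qed.

Lemma fmin_ge (R : realDomainType) (T : finType) (P : pred T) (F : T -> R) b :
  (exists x, P x) -> (forall x, P x -> b <= F x) -> b <= fmin P F.
Proof.
move=> [x Px] H; rewrite /fmin; case: pickP => [x0 Hx0|H']; last first.
  by move: (H' x); rewrite unfold_in Px.
apply: (big_ind (fun v => b <= v)).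
- by apply: H; move: Hx0; rewrite unfold_in.
- by move=> a c ha hc; rewrite le_min ha hc.
- by move=> i; rewrite unfold_in; apply: H.
Qed.

Lemma fmax_ge0 (R : realDomainType) (T : finType) (P : pred T) (F : T -> R) :
  (forall x, P x -> 0 <= F x) -> 0 <= fmax P F.
Proof.
move=> H; rewrite /fmax; case: pickP => [x0 Hx0|_] //.
apply: (big_ind (fun v => 0 <= v)).
- by apply: H; move: Hx0; rewrite unfold_in.
- by move=> a c ha hc; rewrite le_max ha.
- by move=> i; rewrite unfold_in; apply: H.
Qed.

Lemma util_ge0 (R : realDomainType) (M : finType) (v : M -> R) A :
  (forall j, 0 <= v j) -> 0 <= util v A.
Proof. by move=> H; apply: sumr_ge0. Qed.

Lemma util_sub (R : realDomainType) (M : finType) (v : M -> R) (A B : {set M}) :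
  (forall j, 0 <= v j) -> A \subset B -> util v A <= util v B.
Proof.
move=> H sAB; rewrite /util [X in _ <= X](big_setID A) /=.
have -> : B :&: A = A by apply/setIidPr.
by rewrite lerDl; apply: sumr_ge0.
Qed.

Lemma MmS_ge0 (R : realDomainType) (M : finType) (N : nat) (v : M -> R) :
  (forall j, 0 <= v j) -> 0 <= MmS N v.
Proof.
move=> H; apply: fmax_ge0 => f _; rewrite /fmin; case: pickP => [x0 _|_] //.
by apply: (big_ind (fun v => 0 <= v)) => [|a c ha hc|i _];
  rewrite ?le_min ?ha ?hc //; apply: util_ge0.
Qed.

Lemma util_div (R : realFieldType) (M : finType) (v : M -> R) c A :
  util (fun j => v j / c) A = util v A / c.
Proof. by rewrite /util mulr_suml. Qed.

Theorem theorem3 (R : realFieldType) (M : finType) (N : nat)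
  (u : 'I_N -> M -> R) (lam eps alpha beta : R) (c : 'I_N -> R)
  (Sf : {ffun M -> 'I_N}) :
  (forall i j, 0 <= u i j) ->
  0 <= lam -> 0 < eps ->
  (exists S : {ffun M -> 'I_N}, solves_maxmin u lam S) ->
  0 < alpha < 1 -> 0 < beta < 1 -> 1 - eps < alpha * beta ->
  (forall i, alpha * MmS N (u i) <= c i <= MmS N (u i)) ->
  let Npos := fun i : 'I_N => 0 < c i in
  let u' := fun (i : 'I_N) (j : M) => u i j / c i in
  let lamstar :=
    fmax (fun g : {ffun M -> 'I_N} => [forall j, Npos (g j)])
         (fun g => fmin Npos (fun i => util (u' i) (bundle g i))) in
  ([exists i, Npos i] ->
     (forall j, Npos (Sf j)) /\
     (forall i, Npos i -> beta * lamstar <= util (u' i) (bundle Sf i))) ->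
  solves_maxmin u ((1 - eps) * lam) Sf.
Proof.
move=> u0 lam0 eps0 [S HS] /andP[a0 a1] /andP[b0 b1] hab hc Npos u' lamstar HSf i.
have M0 := MmS_ge0 N (u0 i).
have U0 := util_ge0 (bundle Sf i) (u0 i).
case: (ltrP 0 (c i)) => ci; last first.
  have [h1 _] := andP (hc i).
  have -> : MmS N (u i) = 0.
    apply/eqP; rewrite eq_le M0 andbT.
    by rewrite -(pmulr_rle0 _ a0); apply: le_trans h1 ci.
  by rewrite mulr0.
have ex : [exists i, Npos i] by apply/existsP; exists i.
have [_ H2] := HSf ex.
set g := [ffun j => if Npos (S j) then S j else i].
have gpos : [forall j, Npos (g j)].
  by apply/forallP => j; rewrite ffunE; case: ifP.
have lamle : lam <= lamstar.
  apply: le_trans (fmax_ge _ gpos).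
  apply: fmin_ge; first by exists i.
  move=> k Pk; rewrite /u' util_div ler_pdivlMr //.
  have [_ hk] := andP (hc k).
  apply: le_trans (ler_wpM2l lam0 hk) _.
  apply: le_trans (HS k) _.
  apply: util_sub => //; apply/subsetP => j; rewrite !inE ffunE => /eqP Sj.
  by rewrite Sj Pk.
have := H2 i ci; rewrite /u' util_div ler_pdivlMr // => H3.
have [h1 _] := andP (hc i).
set U := util (u i) (bundle Sf i) in U0 H3 *.
set m := MmS N (u i) in M0 h1 *.
have e1 : beta * lam * c i <= U.
  apply: le_trans H3; rewrite ler_pM2r // ler_pM2l //.
have e2 : beta * lam * (alpha * m) <= beta * lam * c i.
  by apply: ler_wpM2l => //; apply: mulr_ge0 => //; apply: ltW.
have e3 : (1 - eps) * lam * m <= beta * lam * (alpha * m).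
  have -> : beta * lam * (alpha * m) = (alpha * beta) * (lam * m) by ring.
  rewrite -mulrA; apply: ler_wpM2r; [by apply: mulr_ge0 | exact: ltW].
by apply: le_trans (le_trans e2 e1).
Qed.
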